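(* The saturation of a finite sample set is finite.
   Context: Fix a countably infinite set of term variables $x,y,z,\dots$ and a countably infinite set of time variables $\kappa,\kappa',\dots$. Basic terms are given by the grammar $t,u::= x\mid tu\mid t^{o}\mid t^{\ell}\mid t^{r}\mid \mathrm{id}\mid\bot$ (purely syntactic). Samples are given by the grammar $\alpha::=\kappa\mid t[\alpha]\mid \mathsf{s}(\alpha)\mid\mathsf{p}(\alpha)\mid\mathsf{last}(t)$, where $\kappa$ ranges over time variables and $t$ over basic terms. Let $\leadsto$ be the relation on samples given by, for all basic terms $t,u$ and samples $\alpha$: $t[\alpha]\leadsto\alpha$; $\mathsf{s}(\alpha)\leadsto\alpha$; $\mathsf{p}(\alpha)\leadsto\alpha$; $(tu)[\alpha]\leadsto t[u[\alpha]]$; $t^{o}[\alpha]\leadsto t[\alpha]$; $t^{r}[\alpha]\leadsto t[t^{r}[\alpha]]$ and $t^{r}[\alpha]\leadsto t[\mathsf{s}(t^{r}[\alpha])]$; $t^{\ell}[\alpha]\leadsto t[t^{\ell}[\alpha]]$ and $t^{\ell}[\alpha]\leadsto t[\mathsf{p}(t^{\ell}[\alpha])]$; $t[\alpha]\leadsto t[\mathsf{last}(t)]$. The saturation of a set $\Delta$ of samples is $\{\beta\mid\exists\alpha\in\Delta,\ \alpha\leadsto^{*}\beta\}$, where $\leadsto^{*}$ is the reflexive transitive closure of $\leadsto$. *)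

(* Defs.v *)
From Stdlib Require Import List Relations.
Import ListNotations.

Definition tvar := nat.
Definition timevar := nat.

(* Basic terms: t,u ::= x | t u | t^o | t^l | t^r | id | bot *)
Inductive bterm : Type :=
| BVar : tvar -> bterm
| BApp : bterm -> bterm -> bterm
| BO : bterm -> bterm
| BL : bterm -> bterm
| BR : bterm -> bterm
| BId : bterm
| BBot : bterm.

(* Samples: alpha ::= kappa | t[alpha] | s(alpha) | p(alpha) | last(t) *)
Inductive sample : Type :=
| STime : timevar -> sample
| SAt : bterm -> sample -> sample
| SS : sample -> sample
| SP : sample -> sample
| SLast : bterm -> sample.

Inductive step : sample -> sample -> Prop :=
| st_at : forall t a, step (SAt t a) a
| st_s : forall a, step (SS a) a
| st_p : forall a, step (SP a) a
| st_app : forall t u a, step (SAt (BApp t u) a) (SAt t (SAt u a))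
| st_o : forall t a, step (SAt (BO t) a) (SAt t a)
| st_r1 : forall t a, step (SAt (BR t) a) (SAt t (SAt (BR t) a))
| st_r2 : forall t a, step (SAt (BR t) a) (SAt t (SS (SAt (BR t) a)))
| st_l1 : forall t a, step (SAt (BL t) a) (SAt t (SAt (BL t) a))
| st_l2 : forall t a, step (SAt (BL t) a) (SAt t (SP (SAt (BL t) a)))
| st_last : forall t a, step (SAt t a) (SAt t (SLast t)).

Definition steps : sample -> sample -> Prop := clos_refl_trans sample step.

Definition saturation (Delta : sample -> Prop) : sample -> Prop :=
  fun b => exists a, Delta a /\ steps a b.

Definition finite_set (S : sample -> Prop) : Prop :=
  exists l : list sample, forall b, S b -> In b l.

(* Main.v *)
Require Import Defs.
From Stdlib Require Import List Relations.
Import ListNotations.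

Fixpoint D (t : bterm) (b : sample) : list sample :=
  SAt t b :: match t with
  | BApp t1 t2 => D t1 (SAt t2 b) ++ D t2 b
  | BO t1 => D t1 b
  | BR t1 => SS (SAt (BR t1) b) :: D t1 (SAt (BR t1) b) ++ D t1 (SS (SAt (BR t1) b))
  | BL t1 => SP (SAt (BL t1) b) :: D t1 (SAt (BL t1) b) ++ D t1 (SP (SAt (BL t1) b))
  | _ => []
  end.

Fixpoint L (t : bterm) : list sample :=
  D t (SLast t) ++ SLast t :: match t with
  | BApp a c => L a ++ L c
  | BO a | BR a | BL a => L a
  | _ => []
  end.

Fixpoint C (a : sample) : list sample :=
  match a with
  | STime k => [STime k]
  | SLast t => [SLast t]
  | SS a' => SS a' :: C a'
  | SP a' => SP a' :: C a'
  | SAt t a' => D t a' ++ L t ++ C a'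
  end.

Lemma L_top t : In (SAt t (SLast t)) (L t).
Proof. destruct t; simpl; auto. Qed.

Lemma D_head t b : In (SAt t b) (D t b).
Proof. destruct t; simpl; auto. Qed.

Lemma C_self a : In a (C a).
Proof. destruct a; simpl; auto. apply in_or_app; left; apply D_head. Qed.

Ltac solve_in := simpl; repeat (rewrite ?in_app_iff; simpl);
  auto 30 using D_head, L_top.

Lemma lemA t : forall b g g', In g (D t b) -> step g g' ->
  In g' (D t b) \/ g' = b \/ In g' (L t).
Proof.
  induction t; intros b g g' H Hs; simpl in H;
  repeat match goal with
  | H: _ \/ _ |- _ => destruct H
  | H: In _ (_ ++ _) |- _ => apply in_app_or in H
  | H: False |- _ => contradiction
  end; subst;
  first [ inversion Hs; subst; solve_in; fail
        | match goal with
          | IH: forall b g g', In g (D ?t b) -> _, H: In _ (D ?t _) |- _ =>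
              destruct (IH _ _ _ H Hs) as [?|[?|?]]; subst; solve_in
          end ].
Qed.

Lemma lemB t : forall g g', In g (L t) -> step g g' -> In g' (L t).
Proof.
  induction t; intros g g' H Hs; cbn [L In] in H;
  repeat match goal with
  | H: _ \/ _ |- _ => destruct H
  | H: In _ (_ ++ _) |- _ => apply in_app_or in H
  | H: False |- _ => contradiction
  | H: In _ (_ :: _) |- _ => destruct H
  | H: In _ [] |- _ => destruct H
  end; subst;
  first [ inversion Hs; fail
        | match goal with
          | H: In _ (D _ _) |- _ =>
              destruct (lemA _ _ _ _ H Hs) as [?|[?|?]]; subst;
              [ cbn [L]; apply in_or_app; left; assumption
              | cbn [L]; apply in_or_app; right; left; reflexivity
              | assumption ]
          end
        | match goal with
          | IH: forall g g', In g (L ?t) -> _, H: In _ (L ?t) |- _ =>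
              specialize (IH _ _ H Hs); solve_in
          end ].
Qed.

Lemma lemC a : forall g g', In g (C a) -> step g g' -> In g' (C a).
Proof.
  induction a; intros g g' H Hs; simpl in H |- *.
  - destruct H as [<-|[]]; inversion Hs.
  - rewrite !in_app_iff in H |- *. destruct H as [H|[H|H]].
    + destruct (lemA _ _ _ _ H Hs) as [?|[?|?]]; subst; auto using C_self.
    + eauto using lemB.
    + eauto.
  - destruct H as [<-|H]; [inversion Hs; subst; right; apply C_self|eauto].
  - destruct H as [<-|H]; [inversion Hs; subst; right; apply C_self|eauto].
  - destruct H as [<-|[]]; inversion Hs.
Qed.

Lemma steps_C c a b : steps a b -> In a (C c) -> In b (C c).
Proof.
  intro H. apply clos_rt_rt1n in H. induction H; intro Ha; auto.
  apply IHclos_refl_trans_1n. eapply lemC; eauto.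
Qed.

Theorem lemma3p5 (Delta : sample -> Prop) :
  finite_set Delta -> finite_set (saturation Delta).
Proof.
  intros [l Hl]. exists (flat_map C l).
  intros b [a [Ha Hs]]. apply in_flat_map. exists a. split; auto.
  eapply steps_C; eauto using C_self.
Qed.
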